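(* Let $\mathcal{W}$ be a weakly exact structure on an additive category $\mathcal{A}$ and let \[\begin{array}{ccc} A & \xrightarrow{i} & B\\ {\scriptstyle f}\downarrow & & \downarrow{\scriptstyle f'}\\ A' & \xrightarrow{i'} & B'\end{array}\] be a commutative square in which $i$ and $i'$ are admissible monics of $\mathcal{W}$. Then the following are equivalent: (i) the square is a pushout; (ii) the sequence $A\xrightarrow{\left[\begin{smallmatrix} i\\ -f\end{smallmatrix}\right]} B\oplus A'\xrightarrow{[f'\ \ i']} B'$ is a short exact sequence belonging to $\mathcal{W}$; (iii) the square is both a pushout and a pullback; (iv) there is a commutative diagram whose rows $A\xrightarrow{i}B\xrightarrow{p}C$ and $A'\xrightarrow{i'}B'\xrightarrow{p'}C$ belong to $\mathcal{W}$ and whose vertical maps are $f$, $f'$ and $1_C$. The dual statement (for admissible epics and pullbacks) also holds.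
   Context: Let $\mathcal{A}$ be an additive category. A kernel-cokernel pair (short exact sequence) is a pair of composable morphisms $A\xrightarrow{i}B\xrightarrow{d}C$ with $i$ a kernel of $d$ and $d$ a cokernel of $i$. A weakly exact structure on $\mathcal{A}$ is a class $\mathcal{W}$ of kernel-cokernel pairs, closed under isomorphisms of sequences and under finite direct sums of sequences, such that, calling $i$ an admissible monic (resp. $d$ an admissible epic) if $(i,d)\in\mathcal{W}$ for some $d$ (resp. some $i$): (E0) $1_A$ is an admissible monic for every object $A$; (E0)$^{op}$ $1_A$ is an admissible epic for every object $A$; (E2) for every admissible monic $i:A\to B$ and every morphism $t:A\to C$ the pushout of $i$ along $t$ exists and the resulting morphism $C\to S$ is an admissible monic; (E2)$^{op}$ for every admissible epic $h:A\to C$ and every morphism $t:B\to C$ the pullback of $h$ along $t$ exists and the resulting morphism $P\to B$ is an admissible epic. *)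

(* Defs.v *)
From HB Require Import structures.
From mathcomp Require Import all_boot all_algebra.
Set Implicit Arguments. Unset Strict Implicit. Unset Printing Implicit Defensive.
Import GRing.Theory.
Local Open Scope ring_scope.

(* An additive category: mor-sets are abelian groups, composition is
   bilinear, there is a zero object and (chosen) binary biproducts.
   [mcomp g f] is "g after f". *)
Record addCat := AddCat {
  obj :> Type;
  mor : obj -> obj -> zmodType;
  mcomp : forall a b c : obj, mor b c -> mor a b -> mor a c;
  idm : forall a : obj, mor a a;
  compA : forall (a b c d : obj) (h : mor c d) (g : mor b c) (f : mor a b),
      mcomp h (mcomp g f) = mcomp (mcomp h g) f;
  comp1m : forall (a b : obj) (f : mor a b), mcomp (idm b) f = f;
  compm1 : forall (a b : obj) (f : mor a b), mcomp f (idm a) = f;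
  compDl : forall (a b c : obj) (g1 g2 : mor b c) (f : mor a b),
      mcomp (g1 + g2) f = mcomp g1 f + mcomp g2 f;
  compDr : forall (a b c : obj) (g : mor b c) (f1 f2 : mor a b),
      mcomp g (f1 + f2) = mcomp g f1 + mcomp g f2;
  zobj : obj;
  zobj_id : idm zobj = 0;
  biprod : obj -> obj -> obj;
  bpin1 : forall a b : obj, mor a (biprod a b);
  bpin2 : forall a b : obj, mor b (biprod a b);
  bpr1 : forall a b : obj, mor (biprod a b) a;
  bpr2 : forall a b : obj, mor (biprod a b) b;
  bpr1_in1 : forall a b : obj, mcomp (bpr1 a b) (bpin1 a b) = idm a;
  bpr2_in2 : forall a b : obj, mcomp (bpr2 a b) (bpin2 a b) = idm b;
  bpr1_in2 : forall a b : obj, mcomp (bpr1 a b) (bpin2 a b) = 0;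
  bpr2_in1 : forall a b : obj, mcomp (bpr2 a b) (bpin1 a b) = 0;
  bpin_bpr : forall a b : obj,
      mcomp (bpin1 a b) (bpr1 a b) + mcomp (bpin2 a b) (bpr2 a b) = idm (biprod a b)
}.

Arguments mor {C} : rename.
Arguments mcomp {C a b c} : rename.
Arguments idm {C} : rename.
Arguments biprod {C} : rename.
Arguments bpin1 {C a b} : rename.
Arguments bpin2 {C a b} : rename.
Arguments bpr1 {C a b} : rename.
Arguments bpr2 {C a b} : rename.

Definition is_kernel {C : addCat} {a b c : C} (i : mor a b) (d : mor b c) : Prop :=
  mcomp d i = 0 /\
  forall (t : C) (x : mor t b), mcomp d x = 0 -> exists! y : mor t a, mcomp i y = x.

Definition is_cokernel {C : addCat} {a b c : C} (i : mor a b) (d : mor b c) : Prop :=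
  mcomp d i = 0 /\
  forall (t : C) (x : mor b t), mcomp x i = 0 -> exists! y : mor c t, mcomp y d = x.

Definition kc_pair {C : addCat} {a b c : C} (i : mor a b) (d : mor b c) : Prop :=
  is_kernel i d /\ is_cokernel i d.

Definition is_iso {C : addCat} {a b : C} (f : mor a b) : Prop :=
  exists g : mor b a, mcomp g f = idm a /\ mcomp f g = idm b.

(* A class of composable pairs (candidate short exact sequences). *)
Definition seqclass (C : addCat) := forall a b c : C, mor a b -> mor b c -> Prop.

Definition iso_seq {C : addCat} {a b c a' b' c' : C}
  (i : mor a b) (d : mor b c) (i' : mor a' b') (d' : mor b' c') : Prop :=
  exists (fa : mor a a') (fb : mor b b') (fc : mor c c'),
    [/\ is_iso fa, is_iso fb, is_iso fc,
        mcomp fb i = mcomp i' fa & mcomp fc d = mcomp d' fb].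

Definition bimap {C : addCat} {a b a' b' : C} (f : mor a a') (g : mor b b')
  : mor (biprod a b) (biprod a' b') :=
  mcomp bpin1 (mcomp f bpr1) + mcomp bpin2 (mcomp g bpr2).

Definition adm_monic {C : addCat} (W : seqclass C) {a b : C} (i : mor a b) : Prop :=
  exists (c : C) (d : mor b c), W a b c i d.

Definition adm_epic {C : addCat} (W : seqclass C) {b c : C} (d : mor b c) : Prop :=
  exists (a : C) (i : mor a b), W a b c i d.

(* The square  a -i-> b, a -t-> c, b -j-> s, c -s'-> s  is a pushout. *)
Definition is_pushout {C : addCat} {a b c s : C}
  (i : mor a b) (t : mor a c) (j : mor b s) (s' : mor c s) : Prop :=
  mcomp j i = mcomp s' t /\
  forall (x : C) (u : mor b x) (v : mor c x), mcomp u i = mcomp v t ->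
    exists! w : mor s x, mcomp w j = u /\ mcomp w s' = v.

(* The square  p -p1-> a -h-> c,  p -p2-> b -t-> c  is a pullback. *)
Definition is_pullback {C : addCat} {a b c p : C}
  (h : mor a c) (t : mor b c) (p1 : mor p a) (p2 : mor p b) : Prop :=
  mcomp h p1 = mcomp t p2 /\
  forall (x : C) (u : mor x a) (v : mor x b), mcomp h u = mcomp t v ->
    exists! w : mor x p, mcomp p1 w = u /\ mcomp p2 w = v.

Record weakly_exact {C : addCat} (W : seqclass C) : Prop := {
  we_kc : forall (a b c : C) (i : mor a b) (d : mor b c), W a b c i d -> kc_pair i d;
  we_iso : forall (a b c a' b' c' : C) (i : mor a b) (d : mor b c)
             (i' : mor a' b') (d' : mor b' c'),
      W a b c i d -> iso_seq i d i' d' -> W a' b' c' i' d';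
  we_sum : forall (a1 b1 c1 a2 b2 c2 : C) (i1 : mor a1 b1) (d1 : mor b1 c1)
             (i2 : mor a2 b2) (d2 : mor b2 c2),
      W a1 b1 c1 i1 d1 -> W a2 b2 c2 i2 d2 -> W _ _ _ (bimap i1 i2) (bimap d1 d2);
  we_E0 : forall a : C, adm_monic W (idm a);
  we_E0op : forall a : C, adm_epic W (idm a);
  we_E2 : forall (a b c : C) (i : mor a b) (t : mor a c), adm_monic W i ->
      exists (s : C) (j : mor b s) (s' : mor c s), is_pushout i t j s' /\ adm_monic W s';
  we_E2op : forall (a b c : C) (h : mor a c) (t : mor b c), adm_epic W h ->
      exists (p : C) (p1 : mor p a) (p2 : mor p b), is_pullback h t p1 p2 /\ adm_epic W p2
}.

(* Main.v *)
Require Import Defs.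
From mathcomp Require Import all_boot all_algebra.
Set Implicit Arguments. Unset Strict Implicit. Unset Printing Implicit Defensive.
Import GRing.Theory.
Local Open Scope ring_scope.

Lemma comp0l (C : addCat) (a b c : C) (f : mor a b) : mcomp (0 : mor b c) f = 0.
Proof. have h := compDl (0 : mor b c) 0 f; rewrite addr0 in h.
by apply: (addrI (mcomp (0 : mor b c) f)); rewrite -h addr0. Qed.

Lemma comp0r (C : addCat) (a b c : C) (g : mor b c) : mcomp g (0 : mor a b) = 0.
Proof. have h := compDr g (0 : mor a b) 0; rewrite addr0 in h.
by apply: (addrI (mcomp g (0 : mor a b))); rewrite -h addr0. Qed.

Lemma compNl (C : addCat) (a b c : C) (g : mor b c) (f : mor a b) : mcomp (- g) f = - mcomp g f.
Proof. have h := compDl (- g) g f; rewrite addNr comp0l in h.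
by apply: (addIr (mcomp g f)); rewrite -h addNr. Qed.

Lemma compNr (C : addCat) (a b c : C) (g : mor b c) (f : mor a b) : mcomp g (- f) = - mcomp g f.
Proof. have h := compDr g (- f) f; rewrite addNr comp0r in h.
by apply: (addIr (mcomp g f)); rewrite -h addNr. Qed.

Lemma compBl (C : addCat) (a b c : C) (g1 g2 : mor b c) (f : mor a b) :
  mcomp (g1 - g2) f = mcomp g1 f - mcomp g2 f.
Proof. by rewrite compDl compNl. Qed.

Lemma compBr (C : addCat) (a b c : C) (g : mor b c) (f1 f2 : mor a b) :
  mcomp g (f1 - f2) = mcomp g f1 - mcomp g f2.
Proof. by rewrite compDr compNr. Qed.

Lemma iso_idm (C : addCat) (a : C) : is_iso (idm a).
Proof. by exists (idm a); rewrite comp1m. Qed.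

Lemma kernel_mono (C : addCat) (a b c : C) (i : mor a b) (d : mor b c) :
  is_kernel i d -> forall (t : C) (y1 y2 : mor t a), mcomp i y1 = mcomp i y2 -> y1 = y2.
Proof.
move=> [Hdi Hk] t y1 y2 H.
have /Hk [y [Hy Hu]] : mcomp d (mcomp i y1) = 0 by rewrite Defs.compA Hdi comp0l.
exact: (etrans (esym (Hu y1 erefl)) (Hu y2 (esym H))).
Qed.

Lemma coker_epi (C : addCat) (a b c : C) (i : mor a b) (d : mor b c) :
  is_cokernel i d -> forall (t : C) (y1 y2 : mor c t), mcomp y1 d = mcomp y2 d -> y1 = y2.
Proof.
move=> [Hdi Hk] t y1 y2 H.
have /Hk [y [Hy Hu]] : mcomp (mcomp y1 d) i = 0 by rewrite -Defs.compA Hdi comp0r.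
exact: (etrans (esym (Hu y1 erefl)) (Hu y2 (esym H))).
Qed.

Lemma pullback_unique (C : addCat) (a b c p q : C) (h : mor a c) (t : mor b c)
  (p1 : mor p a) (p2 : mor p b) (q1 : mor q a) (q2 : mor q b) :
  is_pullback h t p1 p2 -> is_pullback h t q1 q2 ->
  exists phi : mor p q, [/\ is_iso phi, mcomp q1 phi = p1 & mcomp q2 phi = p2].
Proof.
move=> [Hp Up] [Hq Uq].
have [phi [[E1 E2] _]] := Uq p p1 p2 Hp.
have [psi [[F1 F2] _]] := Up q q1 q2 Hq.
exists phi; split=> //; exists psi; split.
- have [z [_ Uz]] := Up p p1 p2 Hp.
  transitivity z; [symmetry; apply: Uz | apply: Uz]; split;
    by rewrite ?compm1 // Defs.compA ?F1 ?F2 ?E1 ?E2.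
- have [z [_ Uz]] := Uq q q1 q2 Hq.
  transitivity z; [symmetry; apply: Uz | apply: Uz]; split;
    by rewrite ?compm1 // Defs.compA ?F1 ?F2 ?E1 ?E2.
Qed.

Lemma W_kernel_replace (C : addCat) (W : seqclass C) (HW : weakly_exact W)
  (a a' b c : C) (i : mor a b) (j : mor a' b) (d : mor b c) :
  W a b c i d -> is_kernel j d -> W a' b c j d.
Proof.
move=> Wid Hj. have [Hi _] := we_kc HW Wid.
case: (Hi) => [Hdi Ki]; case: (Hj) => [Hdj Kj].
have [al [Hal _]] := Ki a' j Hdj.
have [be [Hbe _]] := Kj a i Hdi.
apply: (we_iso HW Wid). exists be, (idm b), (idm c). split.
- exists al; split.
  + by apply: (kernel_mono Hi); rewrite Defs.compA Hal Hbe compm1.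
  + by apply: (kernel_mono Hj); rewrite Defs.compA Hbe Hal compm1.
- exact: iso_idm.
- exact: iso_idm.
- by rewrite comp1m Hbe.
- by rewrite comp1m compm1.
Qed.

Lemma W_coker_replace (C : addCat) (W : seqclass C) (HW : weakly_exact W)
  (a b c c' : C) (i : mor a b) (d : mor b c) (e : mor b c') :
  W a b c i d -> is_cokernel i e -> W a b c' i e.
Proof.
move=> Wid He. have [_ Hd] := we_kc HW Wid.
case: (Hd) => [Hdi Kd]; case: (He) => [Hei Ke].
have [al [Hal _]] := Kd c' e Hei.
have [be [Hbe _]] := Ke c d Hdi.
apply: (we_iso HW Wid). exists (idm a), (idm b), al. split.
- exact: iso_idm.
- exact: iso_idm.
- exists be; split.
  + by apply: (coker_epi Hd); rewrite -Defs.compA Hal Hbe comp1m.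
  + by apply: (coker_epi He); rewrite -Defs.compA Hbe Hal comp1m.
- by rewrite comp1m compm1.
- by rewrite Hal compm1.
Qed.

Lemma W_epi_transport (C : addCat) (W : seqclass C) (HW : weakly_exact W)
  (k0 P B' Q' : C) (k : mor k0 P) (q2 : mor P B') (g : mor Q' B') (phi : mor P Q') :
  W _ _ _ k q2 -> is_iso phi -> mcomp g phi = q2 -> W _ _ _ (mcomp phi k) g.
Proof.
move=> Wk Hphi E. apply: (we_iso HW Wk). exists (idm k0), phi, (idm B').
split=> //; try exact: iso_idm.
- by rewrite compm1.
- by rewrite comp1m.
Qed.

Lemma bp_ext (C : addCat) (t a b : C) (u v : mor t (biprod a b)) :
  mcomp bpr1 u = mcomp bpr1 v -> mcomp bpr2 u = mcomp bpr2 v -> u = v.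
Proof.
move=> H1 H2.
by rewrite -(comp1m u) -(comp1m v) -bpin_bpr !compDl -!Defs.compA H1 H2.
Qed.

Lemma rc11 (C : addCat) (t a b x : C) (u : mor a x) (y : mor t a) :
  mcomp (mcomp u (@bpr1 C a b)) (mcomp bpin1 y) = mcomp u y.
Proof. by rewrite -Defs.compA (Defs.compA bpr1) bpr1_in1 comp1m. Qed.
Lemma rc12 (C : addCat) (t a b x : C) (u : mor a x) (y : mor t b) :
  mcomp (mcomp u (@bpr1 C a b)) (mcomp bpin2 y) = 0.
Proof. by rewrite -Defs.compA (Defs.compA bpr1) bpr1_in2 comp0l comp0r. Qed.
Lemma rc21 (C : addCat) (t a b x : C) (u : mor b x) (y : mor t a) :
  mcomp (mcomp u (@bpr2 C a b)) (mcomp bpin1 y) = 0.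
Proof. by rewrite -Defs.compA (Defs.compA bpr2) bpr2_in1 comp0l comp0r. Qed.
Lemma rc22 (C : addCat) (t a b x : C) (u : mor b x) (y : mor t b) :
  mcomp (mcomp u (@bpr2 C a b)) (mcomp bpin2 y) = mcomp u y.
Proof. by rewrite -Defs.compA (Defs.compA bpr2) bpr2_in2 comp1m. Qed.

Lemma part1 (C : addCat) (W : seqclass C) (HW : weakly_exact W)
  (A B A' B' : C) (i : mor A B) (f : mor A A') (f' : mor B B') (i' : mor A' B') :
     mcomp f' i = mcomp i' f -> adm_monic W i -> adm_monic W i' ->
     let P1 := is_pushout i f f' i' in
     let P2 := W _ _ _ (mcomp bpin1 i - mcomp bpin2 f : mor A (biprod B A'))
                       (mcomp f' bpr1 + mcomp i' bpr2) in
     let P3 := is_pushout i f f' i' /\ is_pullback f' i' i f in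
     let P4 := exists (Q : C) (p : mor B Q) (p' : mor B' Q),
                 [/\ W _ _ _ i p, W _ _ _ i' p' & mcomp (idm Q) p = mcomp p' f'] in
     [/\ P1 <-> P2, P1 <-> P3 & P1 <-> P4].
Proof.
move=> Hc [Q0 [d Wid]] [Q [d' Wi'd']] P1 P2 P3 P4.
have [[Hd'i' Hkd'] [_ Hcok']] := we_kc HW Wi'd'.
  have gin1 : mcomp (mcomp f' bpr1 + mcomp i' bpr2) (@bpin1 C B A') = f'.
    by rewrite compDl -!Defs.compA bpr1_in1 bpr2_in1 compm1 comp0r addr0.
  have gin2 : mcomp (mcomp f' bpr1 + mcomp i' bpr2) (@bpin2 C B A') = i'.
    by rewrite compDl -!Defs.compA bpr1_in2 bpr2_in2 compm1 comp0r add0r.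
have P1P4 : P1 -> P4.
  move=> [_ Hpo].
  have coker : is_cokernel i (mcomp d' f').
    split; first by rewrite -Defs.compA Hc Defs.compA Hd'i' comp0l.
    move=> t x Hx.
    have /Hpo [w [[Hw1 Hw2] Hwu]] : mcomp x i = mcomp (0 : mor A' t) f by rewrite Hx comp0l.
    have [y [Hy Hyu]] := Hcok' t w Hw2.
    exists y; split; first by rewrite Defs.compA Hy Hw1.
    move=> y' Hy'. apply: Hyu. symmetry. apply: Hwu. split.
    - by rewrite -Defs.compA.
    - by rewrite -Defs.compA Hd'i' comp0r.
  exists Q, (mcomp d' f'), d'; split=> //.
  - exact: (W_coker_replace HW Wid coker).
  - by rewrite comp1m.
have P4P2 : P4 -> P2.
  move=> [Q1 [p [p' [Wip Wi'p' Hpp]]]]. rewrite comp1m in Hpp.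
  have [[Hpi Hkp] [_ Hcp]] := we_kc HW Wip.
  have [[Hp'i' Hkp'] _] := we_kc HW Wi'p'.
  have [Ki' _] := we_kc HW Wi'p'.
  have pr1m : mcomp bpr1 (mcomp bpin1 i - mcomp bpin2 f : mor A (biprod B A')) = i.
    by rewrite compBr !Defs.compA bpr1_in1 bpr1_in2 comp1m comp0l subr0.
  have pr2m : mcomp bpr2 (mcomp bpin1 i - mcomp bpin2 f : mor A (biprod B A')) = - f.
    by rewrite compBr !Defs.compA bpr2_in1 bpr2_in2 comp1m comp0l sub0r.
  have gx : forall (t : C) (x : mor t (biprod B A')),
      mcomp (mcomp f' bpr1 + mcomp i' bpr2) x = mcomp f' (mcomp bpr1 x) + mcomp i' (mcomp bpr2 x).
    by move=> t x; rewrite compDl -!Defs.compA.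
  have Hker : is_kernel (mcomp bpin1 i - mcomp bpin2 f : mor A (biprod B A'))
                        (mcomp f' bpr1 + mcomp i' bpr2).
    split.
      by rewrite gx pr1m pr2m compNr Hc subrr.
    move=> t x Hx. rewrite gx in Hx.
    have Hf'x : mcomp f' (mcomp bpr1 x) = - mcomp i' (mcomp bpr2 x).
      by apply/eqP; rewrite -addr_eq0 Hx.
    have /Hkp [y [Hy Hyu]] : mcomp p (mcomp bpr1 x) = 0.
      by rewrite Hpp -Defs.compA Hf'x compNr Defs.compA Hp'i' comp0l oppr0.
    exists y; split.
      apply: bp_ext; rewrite !Defs.compA ?pr1m ?pr2m //.
      rewrite compNl; apply/eqP; rewrite eqr_oppLR; apply/eqP.
      apply: (kernel_mono Ki'). rewrite compNr Defs.compA -Hc -Defs.compA Hy Hf'x.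
      by [].
    move=> y' Hy'. apply: Hyu. by rewrite -Hy' Defs.compA pr1m.
  have Hpb : is_pullback p p' bpr1 (mcomp f' bpr1 + mcomp i' bpr2).
    split.
      by rewrite compDr !Defs.compA -Hpp Hp'i' comp0l addr0.
    move=> X u v Huv.
    have /Hkp' [z [Hz Hzu]] : mcomp p' (v - mcomp f' u) = 0.
      by rewrite compBr Defs.compA -Hpp Huv subrr.
    exists (mcomp bpin1 u + mcomp bpin2 z); split.
      split.
        by rewrite compDr !Defs.compA bpr1_in1 bpr1_in2 comp1m comp0l addr0.
      by rewrite compDr !Defs.compA gin1 gin2 Hz addrC subrK.
    move=> w [Hw1 Hw2]. apply: bp_ext.
      by rewrite Hw1 compDr !Defs.compA bpr1_in1 bpr1_in2 comp1m comp0l addr0.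
    rewrite compDr !Defs.compA bpr2_in1 bpr2_in2 comp1m comp0l add0r.
    apply: Hzu. rewrite -Hw2 gx Hw1. by rewrite addrC addKr.
  have [P [q1 [q2 [Hpb' [K [k Wkq2]]]]]] :=
    we_E2op HW p' (ex_intro _ A (ex_intro _ i Wip)).
  have [phi [Hphi _ E2]] := pullback_unique Hpb' Hpb.
  have W1 := W_epi_transport HW Wkq2 Hphi E2.
  exact: (W_kernel_replace HW W1 Hker).
have P2P1 : P2 -> P1.
  move=> HW2. have [_ [_ Hcok]] := we_kc HW HW2.
  split; first exact: Hc.
  move=> x u v Huv.
  have /Hcok [w [Hw Hwu]] :
      mcomp (mcomp u bpr1 + mcomp v bpr2) (mcomp bpin1 i - mcomp bpin2 f : mor A (biprod B A')) = 0.
    rewrite compDl !compBr rc11 rc12 rc21 rc22.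
    by rewrite subr0 sub0r Huv subrr.
  exists w; split.
    split.
      by rewrite -gin1 Defs.compA Hw compDl -!Defs.compA bpr1_in1 bpr2_in1 compm1 comp0r addr0.
    by rewrite -gin2 Defs.compA Hw compDl -!Defs.compA bpr1_in2 bpr2_in2 compm1 comp0r add0r.
  move=> w' [H1 H2]. apply: Hwu.
  by rewrite compDr !Defs.compA H1 H2.
have P4P3 : P4 -> P1 -> P3.
  move=> [Q1 [p [p' [Wip Wi'p' Hpp]]]] HP1. rewrite comp1m in Hpp.
  have [[Hpi Hkp] _] := we_kc HW Wip.
  have [Ki' _] := we_kc HW Wi'p'.
  have [[Hp'i' _] _] := we_kc HW Wi'p'.
  split=> //; split; first exact: Hc.
  move=> X u v Huv.
  have /Hkp [z [Hz Hzu]] : mcomp p u = 0.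
    by rewrite Hpp -Defs.compA Huv Defs.compA Hp'i' comp0l.
  exists z; split.
    split=> //. apply: (kernel_mono Ki'). by rewrite Defs.compA -Hc -Defs.compA Hz.
  by move=> z' [H1 _]; apply: Hzu.
split; split.
- by move=> /P1P4 /P4P2.
- exact: P2P1.
- by move=> H; apply: P4P3 (P1P4 H) H.
- by case.
- exact: P1P4.
- by move/P4P2; apply: P2P1.
Qed.

Definition opCat (C : addCat) : addCat := {|
  obj := obj C;
  mor := fun a b => @mor C b a;
  mcomp := fun a b c g f => mcomp f g;
  idm := @idm C;
  Defs.compA := fun a b c d h g f => esym (Defs.compA f g h);
  comp1m := fun a b f => compm1 f;
  compm1 := fun a b f => comp1m f;
  compDl := fun a b c g1 g2 f => compDr f g1 g2;
  compDr := fun a b c g f1 f2 => compDl f1 f2 g;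
  zobj := zobj C;
  zobj_id := zobj_id C;
  biprod := @biprod C;
  bpin1 := fun a b => @bpr1 C a b;
  bpin2 := fun a b => @bpr2 C a b;
  bpr1 := fun a b => @bpin1 C a b;
  bpr2 := fun a b => @bpin2 C a b;
  bpr1_in1 := @bpr1_in1 C;
  bpr2_in2 := @bpr2_in2 C;
  bpr1_in2 := @bpr2_in1 C;
  bpr2_in1 := @bpr1_in2 C;
  bpin_bpr := @bpin_bpr C
|}.

Definition Wop (C : addCat) (W : seqclass C) : seqclass (opCat C) :=
  fun a b c i d => W c b a d i.

Lemma iso_sq (C : addCat) (x y x' y' : C) (d : mor x y) (d' : mor x' y')
  (fc : mor x' x) (gc : mor x x') (fb : mor y' y) (gb : mor y y') :
  mcomp fc gc = idm x -> mcomp gb fb = idm y' -> mcomp d fc = mcomp fb d' ->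
  mcomp gb d = mcomp d' gc.
Proof.
move=> H1 H2 E.
rewrite -[mcomp gb d]compm1 -H1 Defs.compA -(Defs.compA gb d fc) E.
by rewrite (Defs.compA gb fb d') H2 comp1m.
Qed.

Lemma bimap_op (C : addCat) (a b a' b' : C) (x : mor a' a) (y : mor b' b) :
  @bimap (opCat C) a b a' b' x y = @bimap C a' b' a b x y.
Proof. by rewrite /bimap /= !Defs.compA. Qed.

Lemma weakly_exact_op (C : addCat) (W : seqclass C) (HW : weakly_exact W) :
  weakly_exact (Wop W).
Proof.
split.
- move=> a b c i d Wdi. have [Hk Hc] := we_kc HW Wdi. by split.
- move=> a b c a' b' c' i d i' d' Wdi
    [fa [fb [fc [[ga [Ha1 Ha2]] [gb [Hb1 Hb2]] [gc [Hc1 Hc2]] E1 E2]]]].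
  apply: (we_iso HW Wdi). exists gc, gb, ga. split.
  + by exists fc.
  + by exists fb.
  + by exists fa.
  + exact: (@iso_sq C _ _ _ _ d d' fc gc fb gb Hc1 Hb2 E2).
  + exact: (@iso_sq C _ _ _ _ i i' fb gb fa ga Hb1 Ha2 E1).
- move=> a1 b1 c1 a2 b2 c2 i1 d1 i2 d2 W1 W2.
  rewrite /Wop !bimap_op. exact: (we_sum HW W1 W2).
- move=> a. exact: (we_E0op HW a).
- move=> a. exact: (we_E0 HW a).
- move=> a b c i t H. by have := @we_E2op C W HW b c a i t H.
- move=> a b c h t H. by have := @we_E2 C W HW c a b h t H.
Qed.

Theorem mainTheorem1 (C : addCat) (W : seqclass C) (HW : weakly_exact W) :
  (forall (A B A' B' : C) (i : mor A B) (f : mor A A') (f' : mor B B') (i' : mor A' B'),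
     mcomp f' i = mcomp i' f -> adm_monic W i -> adm_monic W i' ->
     let P1 := is_pushout i f f' i' in
     let P2 := W _ _ _ (mcomp bpin1 i - mcomp bpin2 f : mor A (biprod B A'))
                       (mcomp f' bpr1 + mcomp i' bpr2) in
     let P3 := is_pushout i f f' i' /\ is_pullback f' i' i f in
     let P4 := exists (Q : C) (p : mor B Q) (p' : mor B' Q),
                 [/\ W _ _ _ i p, W _ _ _ i' p' & mcomp (idm Q) p = mcomp p' f'] in
     [/\ P1 <-> P2, P1 <-> P3 & P1 <-> P4])
  /\
  (forall (A B A' B' : C) (i : mor B A) (f : mor A' A) (f' : mor B' B) (i' : mor B' A'),
     mcomp i f' = mcomp f i' -> adm_epic W i -> adm_epic W i' ->
     let P1 := is_pullback i f f' i' in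
     let P2 := W _ _ _ (mcomp bpin1 f' + mcomp bpin2 i' : mor B' (biprod B A'))
                       (mcomp i bpr1 - mcomp f bpr2) in
     let P3 := is_pullback i f f' i' /\ is_pushout f' i' i f in
     let P4 := exists (K : C) (k : mor K B) (k' : mor K B'),
                 [/\ W _ _ _ k i, W _ _ _ k' i' & mcomp f' k' = mcomp k (idm K)] in
     [/\ P1 <-> P2, P1 <-> P3 & P1 <-> P4]).
Proof.
split; first by move=> *; apply: part1.
move=> A B A' B' i f f' i' Hc Hi Hi'.
have := @part1 (opCat C) (Wop W) (weakly_exact_op HW) A B A' B' i f f' i' Hc Hi Hi'.
move=> [H1 H2 H3]; split; [exact: H1 | exact: H2 | ].
case: H3 => H3a H3b; split.
- move=> /H3a [K [k [k' [Wa Wb E]]]].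
  by exists K, k, k'; split => //; rewrite (esym E).
- move=> [K [k [k' [Wa Wb E]]]]; apply: H3b.
  by exists K, k, k'; split => //; rewrite (esym E).
Qed.
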